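(* If $\phi\in C(\mathbb{Z}_p,\mathbb{C}_p)$ and $y,s\in\mathbb{Z}_p$, then $T(S^y(\phi))(s)=T(\phi)(s+y)$.
   Context: Fix a prime $p$. $\mathbb{C}_p$ denotes the completion of an algebraic closure of $\mathbb{Q}_p$, with absolute value $|\cdot|$ normalized by $|p|=1/p$. $C(\mathbb{Z}_p,\mathbb{C}_p)$ is the $\mathbb{C}_p$-Banach space of continuous functions $\mathbb{Z}_p\to\mathbb{C}_p$ with the sup-norm $\|\cdot\|$. For $n\in\mathbb{Z}_{\ge0}$ and $x\in\mathbb{Z}_p$, $\binom{x}{n}=x(x-1)\cdots(x-n+1)/n!$. For $y\in\mathbb{Z}_p$ and $\phi\in C(\mathbb{Z}_p,\mathbb{C}_p)$ define $S^y(\phi)\in C(\mathbb{Z}_p,\mathbb{C}_p)$ by $S^y(\phi)(x)=\sum_{k\ge0}(-1)^k k!\binom yk\binom xk\phi(x-k)$. Define $T(\phi):\mathbb{Z}_p\to\mathbb{C}_p$ by $T(\phi)(y)=S^y(\phi)(-1)=\sum_{k\ge0}k!\,\phi(-1-k)\binom{y}{k}$. *)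

(* Defs.v *)
From HB Require Import structures.
From mathcomp Require Import all_boot all_order all_algebra.
From mathcomp Require Import reals.
From Stdlib Require Import ClassicalEpsilon.
Set Implicit Arguments. Unset Strict Implicit. Unset Printing Implicit Defensive.
Import Order.TTheory GRing.Theory Num.Theory.
Local Open Scope ring_scope.

(* We characterise it axiomatically
   (up to isometric isomorphism) as a pair (K, nu): K an algebraically closed
   field, nu : K -> R a non-archimedean absolute value with nu p = 1/p,
   K complete for nu, and the elements of K algebraic over Q dense in K.
   These properties determine C_p (the completion of an algebraic closure
   of Q_p) up to isometric isomorphism. *)

Section Defs.
Variables (K : closedFieldType) (R : realType) (nu : K -> R).

Definition nu_cauchy (u : nat -> K) : Prop :=
  forall e : R, 0 < e -> exists N : nat,
    forall m n : nat, (N <= m)%N -> (N <= n)%N -> nu (u m - u n) < e.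

Definition nu_lim (u : nat -> K) (l : K) : Prop :=
  forall e : R, 0 < e -> exists N : nat, forall n : nat, (N <= n)%N -> nu (l - u n) < e.

Record is_Cp (p : nat) : Prop := {
  nu_ge0 : forall x, 0 <= nu x;
  nu_eq0 : forall x, nu x = 0 <-> x = 0;
  nuM : forall x y, nu (x * y) = nu x * nu y;
  nu_ultra : forall x y, nu (x + y) <= Num.max (nu x) (nu y);
  nu_p : nu (p%:R) = (p%:R)^-1;
  nu_complete : forall u, nu_cauchy u -> exists l, nu_lim u l;
  nu_alg_dense : forall (x : K) (e : R), 0 < e ->
     exists (a : K) (q : {poly rat}), q != 0 /\ root (map_poly ratr q) a /\ nu (x - a) < e
}.

(* Z_p inside C_p: the closure of Z *)
Definition isZp (x : K) : Prop :=
  forall e : R, 0 < e -> exists n : int, nu (x - n%:~R) < e.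

(* continuity on Z_p (functions Z_p -> C_p are represented as K -> K;
   only their values on Z_p matter) *)
Definition contZp (phi : K -> K) : Prop :=
  forall x, isZp x -> forall e : R, 0 < e -> exists2 d : R, 0 < d &
    forall z, isZp z -> nu (z - x) < d -> nu (phi z - phi x) < e.

Definition series_to (a : nat -> K) (l : K) : Prop :=
  nu_lim (fun n => \sum_(k < n) a k) l.

Definition ssum (a : nat -> K) : K := epsilon (inhabits 0) (series_to a).

Definition binomK (x : K) (k : nat) : K :=
  (\prod_(i < k) (x - i%:R)) / (k`!)%:R.

Definition S_op (y : K) (phi : K -> K) : K -> K := fun x =>
  ssum (fun k => (-1) ^+ k * (k`!)%:R * binomK y k * binomK x k * phi (x - k%:R)).

Definition T_op (phi : K -> K) : K -> K := fun y =>
  ssum (fun k => (k`!)%:R * phi (-1 - k%:R) * binomK y k).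

End Defs.

(* Main.v *)
Require Import Defs.
From HB Require Import structures.
From mathcomp Require Import all_boot all_order all_algebra.
From mathcomp Require Import reals.
From mathcomp Require Import ring lra.
From Stdlib Require Import ClassicalEpsilon FunctionalExtensionality Classical.
Set Implicit Arguments. Unset Strict Implicit. Unset Printing Implicit Defensive.
Import Order.TTheory GRing.Theory Num.Theory.
Local Open Scope ring_scope.


Lemma fact_dvd m n : (m <= n)%N -> (m`! %| n`!)%N.
Proof.
elim: n => [|n IH]; first by rewrite leqn0 => /eqP ->.
rewrite leq_eqVlt => /orP [/eqP -> //|]; rewrite ltnS => /IH h.
by rewrite factS dvdn_mull.
Qed.

Lemma pX_dvd_fact p m : (0 < p)%N -> (p ^ m %| (m * p)`!)%N.
Proof.
move=> p0; elim: m => [|m IH]; first by rewrite expn0 dvd1n.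
have e : (m.+1 * p = (m.+1 * p).-1.+1)%N by rewrite prednK // muln_gt0.
rewrite e factS -e expnS; apply: dvdn_mul; first by rewrite dvdn_mull.
apply: dvdn_trans IH _; apply: fact_dvd.
rewrite -ltnS -e mulSn addnC; apply: leq_ltn_trans (leq_addr p.-1 _) _.
by rewrite -addnS prednK // ltn_add2r ?ltnSn ?leqnn // ltn_add2l; rewrite ltn_predL.
Qed.

Section Basic.
Variables (p : nat) (K : closedFieldType) (R : realType) (nu : K -> R).
Hypothesis hp : prime p.
Hypothesis hK : is_Cp nu p.

Lemma nu0 : nu 0 = 0.
Proof. by apply/(nu_eq0 hK). Qed.

Lemma nuge0 x : 0 <= nu x.
Proof. exact: (nu_ge0 hK). Qed.

Lemma nu1 : nu 1 = 1.
Proof.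
have h := nuM hK 1 1; rewrite mulr1 in h.
have n0 : nu 1 != 0 by apply/eqP => /(nu_eq0 hK)/eqP; rewrite oner_eq0.
by apply: (mulfI n0); rewrite mulr1 -h.
Qed.

Lemma nuN1 : nu (-1) = 1.
Proof.
have h := nuM hK (-1) (-1); rewrite mulrNN mulr1 nu1 in h.
have h0 := nuge0 (-1).
have : (nu (-1) - 1) * (nu (-1) + 1) = 0 by rewrite mulrDr !mulrBl -h; ring.
move/eqP; rewrite mulf_eq0 => /orP [|]; first by rewrite subr_eq0 => /eqP.
move=> /eqP e; exfalso; have : 0 < nu (-1) + 1 by rewrite ltr_wpDl.
by rewrite e ltxx.
Qed.

Lemma nuN x : nu (- x) = nu x.
Proof. by rewrite -mulN1r (nuM hK) nuN1 mul1r. Qed.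

Lemma nuB x y : nu (x - y) = nu (y - x).
Proof. by rewrite -nuN opprB. Qed.

Lemma nuD_lt x y e : nu x < e -> nu y < e -> nu (x + y) < e.
Proof.
move=> hx hy; apply: le_lt_trans (nu_ultra hK x y) _.
by rewrite gt_max hx hy.
Qed.

Lemma nuD_le x y e : nu x <= e -> nu y <= e -> nu (x + y) <= e.
Proof.
move=> hx hy; apply: le_trans (nu_ultra hK x y) _.
by rewrite ge_max hx hy.
Qed.

Lemma nu_sum_lt (I : Type) (r : seq I) (P : pred I) (F : I -> K) e :
  0 < e -> (forall i, P i -> nu (F i) < e) -> nu (\sum_(i <- r | P i) F i) < e.
Proof.
move=> e0 h; apply: (big_ind (fun x => nu x < e)) => //.
- by rewrite nu0.
- by move=> ??; apply: nuD_lt.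
Qed.

Lemma nu_sum_le (I : Type) (r : seq I) (P : pred I) (F : I -> K) e :
  0 <= e -> (forall i, P i -> nu (F i) <= e) -> nu (\sum_(i <- r | P i) F i) <= e.
Proof.
move=> e0 h; apply: (big_ind (fun x => nu x <= e)) => //.
- by rewrite nu0.
- by move=> ??; apply: nuD_le.
Qed.

Lemma nu_nat n : nu n%:R <= 1.
Proof.
elim: n => [|n IH]; first by rewrite nu0.
by rewrite -addn1 natrD; apply: nuD_le => //; rewrite nu1.
Qed.

Lemma nu_int (z : int) : nu z%:~R <= 1.
Proof.
case: z => n; first exact: nu_nat.
by rewrite NegzE mulrNz nuN; apply: nu_nat.
Qed.

Lemma nuX x m : nu (x ^+ m) = nu x ^+ m.
Proof.
elim: m => [|m IH]; first by rewrite !expr0 nu1.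
by rewrite !exprS (nuM hK) IH.
Qed.

Lemma nuV x : nu (x^-1) = (nu x)^-1.
Proof.
have [->|x0] := eqVneq x 0; first by rewrite invr0 nu0 invr0.
have h := nuM hK x x^-1; rewrite mulfV // nu1 in h.
have n0 : nu x != 0 by apply/eqP => /(nu_eq0 hK)/eqP; rewrite (negPf x0).
by apply: (mulfI n0); rewrite -h mulfV.
Qed.

Lemma p_gt1 : (1 < p)%N.
Proof. exact: prime_gt1. Qed.

Lemma nu_dvd m n : (p ^ m %| n)%N -> nu n%:R <= (p%:R^-1) ^+ m.
Proof.
case/dvdnP => q ->; rewrite natrM (nuM hK) natrX nuX (nu_p hK).
rewrite -[X in _ <= X]mul1r; apply: ler_wpM2r; last exact: nu_nat.
  by rewrite exprn_ge0 // invr_ge0.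
Qed.



Lemma nu_nat_pos n : (0 < n)%N -> 0 < nu n%:R.
Proof.
elim/ltn_ind: n => n IH n0.
have [pn|npn] := boolP (p %| n)%N.
  case/dvdnP: pn => q eq; move: n0; rewrite eq muln_gt0 => /andP [q0 _].
  rewrite natrM (nuM hK) (nu_p hK); apply: mulr_gt0; last by rewrite invr_gt0 ltr0n prime_gt0.
  apply: IH => //; rewrite eq -[X in (X < _)%N]muln1 ltn_mul2l q0.
  exact: prime_gt1.
rewrite lt_def nuge0 // andbT; apply/eqP => nu0n.
have cop : coprime p n by rewrite prime_coprime.
have [a _] := Bezoutl n (prime_gt0 hp); rewrite (eqP cop) => /dvdnP [t et].
have h1 : (1 = (t * p)%:R - (a * n)%:R :> K).
  by rewrite -et natrD addrK.
have hn : n%:R = 0 :> K by apply/(nu_eq0 hK).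
have : nu (1 : K) < 1.
  rewrite h1; apply: nuD_lt => //.
    rewrite natrM (nuM hK) (nu_p hK); apply: le_lt_trans (_ : 1 * p%:R^-1 < 1).
      by apply: ler_wpM2r; [rewrite invr_ge0 | exact: nu_nat].
    by rewrite mul1r invf_lt1 ?ltr1n ?prime_gt1 // ltr0n prime_gt0.
  by rewrite nuN natrM hn mulr0 nu0 // ltr01.
by rewrite nu1 // ltxx.
Qed.

Lemma nat_neq0 n : (0 < n)%N -> n%:R != 0 :> K.
Proof.
move=> /nu_nat_pos h; apply/eqP => e; move: h; by rewrite e nu0 ltxx.
Qed.

Lemma fact_neq0 n : n`!%:R != 0 :> K.
Proof. exact/nat_neq0/fact_gt0. Qed.

Lemma pinvX_small (e : R) : 0 < e -> exists m, (p%:R^-1) ^+ m < e.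
Proof.
move=> e0; exists (Num.Def.archi_bound e^-1).
set m := Num.Def.archi_bound e^-1.
have h1 : e^-1 < m%:R by apply: archi_boundP; rewrite invr_ge0 ltW.
have h2 : (m < p ^ m)%N by apply: ltn_expl; exact: prime_gt1.
rewrite exprVn -natrX -[X in _ < X]invrK; rewrite ltf_pV2 ?posrE ?invr_gt0 //.
  by apply: lt_trans h1 _; rewrite ltr_nat.
by rewrite ltr0n expn_gt0 prime_gt0.
Qed.

Lemma fact_small (e : R) : 0 < e -> exists N, forall n, (N <= n)%N -> nu n`!%:R < e.
Proof.
move=> e0; have [m hm] := pinvX_small e0.
exists (m * p)%N => n hn; apply: le_lt_trans hm.
apply: nu_dvd => //; apply: dvdn_trans (pX_dvd_fact m (prime_gt0 hp)) _.
exact: fact_dvd.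
Qed.



Definition small (a : nat -> K) :=
  forall e : R, 0 < e -> exists N, forall n, (N <= n)%N -> nu (a n) < e.

Lemma sum_split (a : nat -> K) n d :
  \sum_(k < n + d) a k = \sum_(k < n) a k + \sum_(k < d) a (n + k)%N.
Proof.
elim: d => [|d IH]; first by rewrite addn0 big_ord0 addr0.
by rewrite addnS !big_ord_recr /= IH addrA.
Qed.

Lemma nu_lt0 (x : R) : (forall e : R, 0 < e -> x < e) -> x <= 0.
Proof.
move=> h; rewrite leNgt; apply/negP => x0; by have := h x x0; rewrite ltxx.
Qed.

Lemma lim_unique u l1 l2 : nu_lim nu u l1 -> nu_lim nu u l2 -> l1 = l2.
Proof.
move=> h1 h2; apply/eqP; rewrite -subr_eq0; apply/eqP/(nu_eq0 hK).
apply/eqP; rewrite eq_le nuge0 // andbT; apply: nu_lt0 => e e0.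
have [N1 H1] := h1 e e0; have [N2 H2] := h2 e e0.
have -> : l1 - l2 = (l1 - u (maxn N1 N2)) - (l2 - u (maxn N1 N2)) by ring.
apply: nuD_lt => //; rewrite ?nuN; [apply: H1 | apply: H2];
  by rewrite ?leq_maxl ?leq_maxr.
Qed.

Lemma ssum_eq a l : series_to nu a l -> ssum nu a = l.
Proof.
move=> h; apply: (lim_unique (u := fun n => \sum_(k < n) a k)) => //.
by apply: (epsilon_spec (inhabits 0) (series_to nu a)); exists l.
Qed.

Lemma small_series a : small a -> exists l, series_to nu a l.
Proof.
move=> sa; apply: (nu_complete hK) => e e0.
have [N HN] := sa e e0; exists N.
have key : forall m n, (N <= n)%N -> (n <= m)%N ->
    nu (\sum_(k < m) a k - \sum_(k < n) a k) < e.
  move=> m n Nn nm; rewrite -(subnKC nm) sum_split addrC addKr.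
  by apply: nu_sum_lt => // i _; apply: HN; apply: leq_trans Nn (leq_addr _ _).
move=> m n Nm Nn; have [nm|mn] := leqP n m; first exact: key.
by rewrite nuB //; apply: key => //; apply: ltnW.
Qed.

Lemma series_tail a l N (e : R) : 0 < e -> series_to nu a l ->
  (forall n, (N <= n)%N -> nu (a n) < e) -> nu (l - \sum_(k < N) a k) < e.
Proof.
move=> e0 h HN; have [M HM] := h e e0.
set m := maxn M N.
have -> : l - \sum_(k < N) a k =
   (l - \sum_(k < m) a k) + (\sum_(k < m) a k - \sum_(k < N) a k) by ring.
apply: nuD_lt => //; first by apply: HM; rewrite leq_maxl.
have hNm : (N <= m)%N by rewrite leq_maxr.
rewrite -(subnKC hNm) sum_split addrC addKr.
by apply: nu_sum_lt => // i _; apply: HN; apply: leq_addr.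
Qed.

Lemma series_scale c a l : series_to nu a l ->
  series_to nu (fun n => c * a n) (c * l).
Proof.
move=> h e e0.
have c1 : 0 < nu c + 1 by rewrite ltr_wpDl ?nuge0.
have [N HN] := h (e / (nu c + 1)) (divr_gt0 e0 c1).
exists N => n Nn; rewrite -mulr_sumr -mulrBr (nuM hK).
have h1 := HN n Nn; have h0 := nuge0 (l - \sum_(k < n) a k).
apply: le_lt_trans (_ : (nu c + 1) * nu (l - \sum_(k < n) a k) < e).
  by rewrite ler_wpM2r // lerDl ler01.
by rewrite mulrC -ltr_pdivlMr.
Qed.

Lemma ssum_scale_l c a : c != 0 -> (exists l, series_to nu (fun n => c * a n) l) ->
  c * ssum nu a = ssum nu (fun n => c * a n).
Proof.
move=> c0 [l hl]; rewrite (ssum_eq hl).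
have h := series_scale c^-1 hl.
have ea : (fun n => c^-1 * (c * a n)) = a.
  by apply: functional_extensionality => n; rewrite mulKf.
rewrite ea in h; by rewrite (ssum_eq h) mulVKf.
Qed.

Lemma ssum_scale_r c a : (exists l, series_to nu a l) ->
  ssum nu a * c = ssum nu (fun n => a n * c).
Proof.
move=> [l hl]; rewrite (ssum_eq hl).
have h := series_scale c hl.
have ea : (fun n => c * a n) = (fun n => a n * c).
  by apply: functional_extensionality => n; rewrite mulrC.
by rewrite ea in h; rewrite (ssum_eq h) mulrC.
Qed.



Lemma ssum_spec a : small a -> series_to nu a (ssum nu a).
Proof. by move=> /small_series [l hl]; rewrite (ssum_eq hl). Qed.

Lemma diag_sum (f : nat -> nat -> K) N :
  \sum_(n < N) \sum_(i < n.+1) f i (n - i)%N =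
  \sum_(k < N) \sum_(j < N - k) f k j.
Proof.
elim: N => [|N IH]; first by rewrite !big_ord0.
rewrite big_ord_recr /= IH.
rewrite [RHS](eq_bigr (fun k : 'I_N.+1 => \sum_(j < N - k) f k j + f k (N - k)%N)); last first.
  move=> i _; rewrite subSn; last by rewrite -ltnS ltn_ord.
  by rewrite big_ord_recr.
by rewrite big_split /= [in RHS]big_ord_recr /= subnn big_ord0 addr0.
Qed.

Lemma rearrange (f : nat -> nat -> K) :
  (forall e : R, 0 < e -> exists N, forall k j, (N <= k + j)%N -> nu (f k j) < e) ->
  ssum nu (fun k => ssum nu (f k)) = ssum nu (fun n => \sum_(i < n.+1) f i (n - i)%N).
Proof.
move=> hf.
have sf : forall k, small (f k).
  move=> k e e0; have [N HN] := hf e e0; exists N => n Nn; apply: HN.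
  by apply: leq_trans Nn (leq_addl _ _).
set g := fun n => \sum_(i < n.+1) f i (n - i)%N.
have sg : small g.
  move=> e e0; have [N HN] := hf e e0; exists N => n Nn.
  apply: nu_sum_lt => // i _; apply: HN; rewrite subnKC //.
  by rewrite -ltnS ltn_ord.
have hG := ssum_spec sg.
set G := ssum nu g in hG *.
suff : series_to nu (fun k => ssum nu (f k)) G by move/ssum_eq.
move=> e e0; have [N0 H0] := hf e e0; have [N1 H1] := hG e e0.
exists (maxn N0 N1) => N hN.
have hN0 : (N0 <= N)%N by apply: leq_trans hN; rewrite leq_maxl.
have hN1 : (N1 <= N)%N by apply: leq_trans hN; rewrite leq_maxr.
have -> : G - \sum_(k < N) ssum nu (f k) =
   (G - \sum_(n < N) g n) + \sum_(k < N) (\sum_(j < N - k) f k j - ssum nu (f k)).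
  rewrite /g diag_sum big_split /= sumrN; ring.
apply: nuD_lt; first exact: H1.
apply: nu_sum_lt => // k _; rewrite nuB.
apply: series_tail => //; first exact: ssum_spec.
move=> j hj; apply: H0; apply: leq_trans hN0 _.
apply: leq_trans (_ : (N <= k + (N - k))%N) _; first by rewrite subnKC // ltnW.
by rewrite leq_add2l.
Qed.


Definition ff (x : K) (n : nat) : K := \prod_(i < n) (x - i%:R).

Lemma ffS x n : ff x n.+1 = ff x n * (x - n%:R).
Proof. by rewrite /ff big_ord_recr. Qed.

Lemma ff0 x : ff x 0 = 1.
Proof. by rewrite /ff big_ord0. Qed.

Lemma binomK_ff x n : binomK x n = ff x n / n`!%:R.
Proof. by []. Qed.

Lemma ff_vdm s y n :
  ff (s + y) n = \sum_(i < n.+1) 'C(n, i)%:R * ff s i * ff y (n - i)%N.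
Proof.
elim: n => [|n IH]; first by rewrite big_ord_recr big_ord0 /= !ff0 add0r bin0 !mul1r.
rewrite ffS IH mulr_suml.
have e1 : forall i : 'I_n.+1,
  'C(n, i)%:R * ff s i * ff y (n - i)%N * (s + y - n%:R) =
  'C(n, i)%:R * ff s i.+1 * ff y (n - i)%N +
  'C(n, i)%:R * ff s i * ff y (n - i).+1.
  move=> i; rewrite !ffS.
  have -> : (n%:R : K) = i%:R + (n - i)%N%:R.
    by rewrite -natrD subnKC // -ltnS ltn_ord.
  ring.
rewrite (eq_bigr _ (fun i _ => e1 i)) big_split /=.
set A := \sum_(i < n.+1) _.
set D := \sum_(i < n) 'C(n, i.+1)%:R * ff s i.+1 * ff y (n - i)%N.
have hB : \sum_(i < n.+1) 'C(n, i)%:R * ff s i * ff y (n - i).+1 = ff y n.+1 + D.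
  rewrite big_ord_recl /= bin0 ff0 subn0 !mul1r; congr (_ + _).
  apply: eq_bigr => i _; rewrite /bump /= add1n.
  by rewrite subnSK // ltn_ord.
rewrite hB [in RHS]big_ord_recl /= bin0 ff0 subn0 !mul1r.
rewrite (eq_bigr (fun i : 'I_n.+1 =>
   'C(n, i)%:R * ff s i.+1 * ff y (n - i)%N +
   'C(n, i.+1)%:R * ff s i.+1 * ff y (n - i)%N)); last first.
  move=> i _; rewrite /bump /= add1n binS natrD subSS.
  by rewrite mulrDl mulrDl addrC.
rewrite big_split /= -/A [X in _ = _ + (_ + X)]big_ord_recr /= bin_small // mul0r mul0r addr0.
rewrite -/D; ring.
Qed.



Lemma binomK_vdm (s y : K) n :
  binomK (s + y) n = \sum_(i < n.+1) binomK s i * binomK y (n - i)%N.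
Proof.
rewrite binomK_ff ff_vdm mulr_suml; apply: eq_bigr => i _.
have hi : (i <= n)%N by rewrite -ltnS ltn_ord.
have hb := bin_fact hi.
rewrite !binomK_ff -hb !natrM.
have c0 : ('C(n, i)%:R : K) != 0 by apply: nat_neq0; rewrite bin_gt0.
have f1 := fact_neq0 i; have f2 := fact_neq0 (n - i).
by field; rewrite c0 f1 f2.
Qed.

Lemma ff_neg k j :
  (-1) ^+ j * ff (-1 - k%:R) j * k`!%:R = (k + j)`!%:R :> K.
Proof.
elim: j => [|j IH]; first by rewrite expr0 ff0 !mul1r addn0.
rewrite addnS factS exprS ffS natrM -IH -addn1 !natrD.
ring.
Qed.

Lemma S_term k j (y : K) (phi : K -> K) :
  k`!%:R * ((-1) ^+ j * j`!%:R * binomK y j * binomK (-1 - k%:R) j *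
            phi (-1 - k%:R - j%:R)) =
  (k + j)`!%:R * phi (-1 - (k + j)%N%:R) * binomK y j.
Proof.
rewrite -ff_neg natrD opprD addrA /binomK -/(ff _ _) -/(ff _ _).
have f1 := fact_neq0 j.
by field.
Qed.

Lemma ff_le1 x n : nu x <= 1 -> nu (ff x n) <= 1.
Proof.
move=> hx; elim: n => [|n IH]; first by rewrite ff0 nu1.
rewrite ffS (nuM hK) -[X in _ <= X]mulr1; apply: ler_pM => //; try exact: nuge0.
by apply: nuD_le => //; rewrite nuN nu_nat.
Qed.

Lemma ff_diff x z n : nu x <= 1 -> nu z <= 1 ->
  nu (ff x n - ff z n) <= nu (x - z).
Proof.
move=> hx hz; elim: n => [|n IH]; first by rewrite !ff0 subrr nu0 nuge0.
have -> : ff x n.+1 - ff z n.+1 =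
   (ff x n - ff z n) * (x - n%:R) + ff z n * (x - z).
  rewrite !ffS; ring.
apply: nuD_le.
  rewrite (nuM hK) -[X in _ <= X]mulr1; apply: ler_pM => //; try exact: nuge0.
  by apply: nuD_le => //; rewrite nuN nu_nat.
rewrite (nuM hK) -[X in _ <= X]mul1r; apply: ler_pM => //; try exact: nuge0.
exact: ff_le1.
Qed.

Lemma ff_nat n k : ff n%:R k = (n ^_ k)%:R :> K.
Proof.
elim: k => [|k IH]; first by rewrite ff0 ffactn0.
rewrite ffS IH ffactnSr.
have [kn|nk] := leqP k n; first by rewrite natrM natrB.
by rewrite ffact_small // !mul0r.
Qed.

Lemma binomK_nat n k : binomK n%:R k = 'C(n, k)%:R :> K.
Proof.
rewrite binomK_ff ff_nat -bin_ffact natrM mulfK //; exact: fact_neq0.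
Qed.

Lemma isZp_nat y (e : R) : isZp nu y -> 0 < e -> exists n : nat, nu (y - n%:R) < e.
Proof.
move=> hy e0; have [z hz] := hy e e0.
case: z hz => [n|m] hz; first by exists n.
have [M hM] := pinvX_small e0.
have hle : (m.+1 <= p ^ M * m.+1)%N by rewrite leq_pmull // expn_gt0 prime_gt0.
exists (p ^ M * m.+1 - m.+1)%N.
have -> : y - (p ^ M * m.+1 - m.+1)%N%:R =
    (y - (Negz m)%:~R) - (p ^ M * m.+1)%N%:R.
  by rewrite natrB // NegzE mulrNz; ring.
apply: nuD_lt => //; rewrite nuN; apply: le_lt_trans hM.
by apply: nu_dvd; apply: dvdn_mulr.
Qed.

Lemma isZp_le1 y : isZp nu y -> nu y <= 1.
Proof.
move=> hy; have [n hn] := isZp_nat hy ltr01.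
have -> : y = (y - n%:R) + n%:R by rewrite subrK.
by apply: nuD_le; [exact: ltW | exact: nu_nat].
Qed.

Lemma binomK_le1 y k : isZp nu y -> nu (binomK y k) <= 1.
Proof.
move=> hy; have f0 := fact_neq0 k.
have fp : 0 < nu (k`!%:R : K) by apply: nu_nat_pos; exact: fact_gt0.
have [n hn] := isZp_nat hy fp.
have -> : binomK y k = (binomK y k - binomK n%:R k) + binomK n%:R k by rewrite subrK.
apply: nuD_le; last by rewrite binomK_nat nu_nat.
rewrite !binomK_ff -mulrBl (nuM hK) nuV ler_pdivrMr // mul1r.
apply: le_trans (ltW hn); apply: ff_diff; first exact: isZp_le1.
exact: nu_nat.
Qed.



Lemma negz_eq c : (Negz c)%:~R = -1 - c%:R :> K.
Proof.
rewrite NegzE mulrNz; change (- ((c.+1)%:R : K) = -1 - c%:R).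
by rewrite -addn1 natrD opprD addrC.
Qed.

Lemma isZp_int (z : int) : isZp nu (z%:~R).
Proof. by move=> e e0; exists z; rewrite subrr nu0. Qed.

Lemma close_mod a b m : (a %% p ^ m = b %% p ^ m)%N ->
  nu (a%:R - b%:R) <= (p%:R^-1) ^+ m.
Proof.
move=> h.
have -> : a%:R - b%:R = (a %/ p ^ m * p ^ m)%N%:R - (b %/ p ^ m * p ^ m)%N%:R :> K.
  by rewrite {1}(divn_eq a (p ^ m)) {1}(divn_eq b (p ^ m)) h !natrD; ring.
apply: nuD_le; rewrite ?nuN; apply: nu_dvd; exact: dvdn_mull.
Qed.

Lemma finite_bound (P : nat -> R -> Prop) :
  (forall d M M', P d M -> M <= M' -> P d M') ->
  (forall d, exists M, P d M) -> forall B, exists M, forall d, (d < B)%N -> P d M.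
Proof.
move=> mono h; elim => [|B [M HM]]; first by exists 0.
have [M' HM'] := h B; exists (Num.max M M') => d; rewrite ltnS leq_eqVlt.
case/orP => [/eqP ->|dB].
  by apply: mono HM' _; rewrite le_max lexx orbT.
by apply: mono (HM d dB) _; rewrite le_max lexx.
Qed.

Lemma phi_bounded (phi : K -> K) : contZp nu phi ->
  exists M : R, forall n : nat, nu (phi (-1 - n%:R)) <= M.
Proof.
move=> hphi; apply: NNPP => nb.
set a := fun n : nat => phi (-1 - n%:R).
pose Unb m c := forall M : R, exists n, (n %% p ^ m = c)%N /\ M < nu (a n).
have U0 : Unb 0%N 0%N.
  move=> M; apply: NNPP => h; apply: nb; exists M => n.
  rewrite leNgt; apply/negP => hn; apply: h; exists n; by rewrite expn0 modn1.
have step : forall m c, Unb m c -> exists d, (d %% p ^ m = c)%N /\ Unb m.+1 d.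
  move=> m c hU; apply: NNPP => hno.
  have hb : forall d, exists M : R, (d %% p ^ m = c)%N ->
      forall n, (n %% p ^ m.+1 = d)%N -> nu (a n) <= M.
    move=> d; apply: NNPP => hd; apply: hno; exists d; split.
      by apply: NNPP => hdc; apply: hd; exists 0 => /hdc.
    move=> M; apply: NNPP => hM; apply: hd; exists M => _ n hn.
    rewrite leNgt; apply/negP => lt; apply: hM; by exists n.
  pose P := fun d M => (d %% p ^ m = c)%N ->
      forall n, (n %% p ^ m.+1 = d)%N -> nu (a n) <= M.
  have mono : forall d M M', P d M -> M <= M' -> P d M'.
    move=> d M M' h MM' hdc n hn; apply: le_trans MM'; exact: h.
  have [M HM] := finite_bound mono hb (p ^ m.+1).
  have [n [hn1 hn2]] := hU M.
  have hlt : (n %% p ^ m.+1 < p ^ m.+1)%N by rewrite ltn_pmod ?expn_gt0 ?prime_gt0.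
  have hmod : ((n %% p ^ m.+1) %% p ^ m = c)%N by rewrite modn_dvdm ?hn1 // dvdn_exp2l.
  have := HM _ hlt hmod n erefl.
  by rewrite leNgt hn2.
  pose nextc := fun m c => epsilon (inhabits 0%N) (fun d => (d %% p ^ m = c)%N /\ Unb m.+1 d).
  pose cs := nat_rect (fun _ => nat) 0%N (fun m c => nextc m c).
  have hU : forall m, Unb m (cs m).
    elim => [|m IH] //.
    have := epsilon_spec (inhabits 0%N) (fun d => (d %% p ^ m = cs m)%N /\ Unb m.+1 d) (step m _ IH).
    by case.
  have hm1 : forall m, (cs m.+1 %% p ^ m = cs m)%N.
    move=> m.
    have := epsilon_spec (inhabits 0%N) (fun d => (d %% p ^ m = cs m)%N /\ Unb m.+1 d) (step m _ (hU m)).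
    by case.
  have hlt : forall m, (cs m < p ^ m)%N.
    move=> m; have [n [hn _]] := hU m 0; rewrite -hn ltn_pmod // expn_gt0 prime_gt0 //.
  have hchain : forall m m', (m <= m')%N -> (cs m' %% p ^ m = cs m)%N.
    move=> m; elim => [|m' IH].
      by rewrite leqn0 => /eqP ->; rewrite expn0 modn1.
    rewrite leq_eqVlt => /orP [/eqP <-|]; first by rewrite modn_small.
    rewrite ltnS => hm; rewrite -(IH hm) -(hm1 m') modn_dvdm //.
    exact: dvdn_exp2l.
  pose xs := fun m => -1 - (cs m)%:R : K.
  have hcl : forall M m, (M <= m)%N -> nu (xs m - xs M) <= (p%:R^-1) ^+ M.
    move=> M m hMm; rewrite /xs.
    have -> : -1 - (cs m)%:R - (-1 - (cs M)%:R) = - ((cs m)%:R - (cs M)%:R) :> K by ring.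
    rewrite nuN; apply: close_mod; rewrite hchain // modn_small //.
  have hcauchy : nu_cauchy nu xs.
    move=> e e0; have [M hM] := pinvX_small e0; exists M => m n hm hn.
    have -> : xs m - xs n = (xs m - xs M) - (xs n - xs M) by ring.
    apply: nuD_lt; rewrite ?nuN; apply: le_lt_trans hM; exact: hcl.
  have [x hx] := nu_complete hK hcauchy.
  have hZx : isZp nu x.
    move=> e e0; have [N hN] := hx e e0; exists (Negz (cs N)).
    by rewrite negz_eq; apply: hN.
  have [d d0 hd] := hphi x hZx 1 ltr01.
  have [M0 hM0] := pinvX_small d0.
  have [N hN] := hx d d0.
  set m := maxn M0 N.
  have [n [hn1 hn2]] := hU m (Num.max 1 (nu (phi x))).
  have hz : nu ((-1 - n%:R) - x) < d.
    have -> : (-1 - n%:R) - x = - ((n%:R - (cs m)%:R) + (x - xs m)) by rewrite /xs; ring.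
    rewrite nuN; apply: nuD_lt; last by apply: hN; rewrite leq_maxr.
    apply: le_lt_trans hM0; apply: close_mod.
    rewrite -hn1 modn_dvdm //.
    by apply: dvdn_exp2l; rewrite leq_maxl.
  have := hd _ (isZp_int (Negz n)); rewrite negz_eq => /(_ hz) h1.
  move: hn2; rewrite /a; apply/negP; rewrite -leNgt.
  have -> : phi (-1 - n%:R) = (phi (-1 - n%:R) - phi x) + phi x by rewrite subrK.
  apply: nuD_le; first by apply: le_trans (ltW h1) _; rewrite le_max lexx.
  by rewrite le_max lexx orbT.
Qed.


Lemma nu_mul_le1 a u : nu u <= 1 -> nu (a * u) <= nu a.
Proof.
move=> hu; rewrite (nuM hK) -[X in _ <= X]mulr1; apply: ler_wpM2l => //.
exact: nuge0.
Qed.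

Lemma main_lemma (phi : K -> K) (hphi : contZp nu phi) (y s : K)
  (hy : isZp nu y) (hs : isZp nu s) :
  T_op nu (S_op nu y phi) s = T_op nu phi (s + y).
Proof.
have [M hM] := phi_bounded hphi.
set b := fun n : nat => n`!%:R * phi (-1 - n%:R).
have M'0 : 0 < Num.max M 1 by rewrite lt_max ltr01 orbT.
have bsmall : forall e : R, 0 < e -> exists N, forall n, (N <= n)%N -> nu (b n) < e.
  move=> e e0; have [N hN] := fact_small (divr_gt0 e0 M'0); exists N => n hn.
  rewrite /b (nuM hK); apply: le_lt_trans (_ : nu (n`!%:R : K) * Num.max M 1 < e).
    apply: ler_wpM2l; first exact: nuge0.
    by apply: le_trans (hM n) _; rewrite le_max lexx.
  by rewrite -ltr_pdivlMr //; apply: hN.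
set f := fun k j => b (k + j)%N * binomK y j * binomK s k.
have hf : forall e : R, 0 < e -> exists N, forall k j, (N <= k + j)%N -> nu (f k j) < e.
  move=> e e0; have [N hN] := bsmall e e0; exists N => k j hkj.
  apply: le_lt_trans (hN _ hkj); rewrite /f.
  apply: le_trans (nu_mul_le1 _ (binomK_le1 k hs)) _.
  exact: nu_mul_le1 (binomK_le1 j hy).
have sg : forall k, small (fun j => b (k + j)%N * binomK y j).
  move=> k e e0; have [N hN] := bsmall e e0; exists N => j hj.
  apply: le_lt_trans (hN _ _); first exact: nu_mul_le1 (binomK_le1 j hy).
  by apply: leq_trans hj (leq_addl _ _).
have eL : (fun k => k`!%:R * S_op nu y phi (-1 - k%:R) * binomK s k) =
          (fun k => ssum nu (f k)).
  apply: functional_extensionality => k; rewrite /S_op.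
  rewrite ssum_scale_l; last 2 first.
  - exact: fact_neq0.
  - exists (ssum nu (fun j => b (k + j)%N * binomK y j)).
    have -> : (fun n => k`!%:R *
       ((-1) ^+ n * n`!%:R * binomK y n * binomK (-1 - k%:R) n * phi (-1 - k%:R - n%:R))) =
       (fun j => b (k + j)%N * binomK y j).
      by apply: functional_extensionality => j; rewrite S_term.
    exact: ssum_spec.
  have -> : (fun n => k`!%:R *
       ((-1) ^+ n * n`!%:R * binomK y n * binomK (-1 - k%:R) n * phi (-1 - k%:R - n%:R))) =
       (fun j => b (k + j)%N * binomK y j).
    by apply: functional_extensionality => j; rewrite S_term.
  rewrite ssum_scale_r; first by [].
  by exists (ssum nu (fun j => b (k + j)%N * binomK y j)); apply: ssum_spec.
rewrite /T_op eL rearrange //.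
congr ssum; apply: functional_extensionality => n.
rewrite binomK_vdm mulr_sumr; apply: eq_bigr => i _.
rewrite /f subnKC; last by rewrite -ltnS ltn_ord.
rewrite /b; ring.
Qed.

End Basic.

Theorem corollary6p5 (p : nat) (K : closedFieldType) (R : realType) (nu : K -> R)
  (hp : prime p) (hK : is_Cp nu p)
  (phi : K -> K) (hphi : contZp nu phi)
  (y s : K) (hy : isZp nu y) (hs : isZp nu s) :
  T_op nu (S_op nu y phi) s = T_op nu phi (s + y).
Proof. exact: (main_lemma hp hK hphi hy hs). Qed.
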